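(* Let $G=(V,E)$ be a finite graph and $x_e\in(0,1)$ for each $e\in E$. Let $\Omega=\{0,1\}^E$, $\Sigma\subset\Omega$, $f:\Omega\to2^\Sigma$, $f(\omega)=\Sigma^\downarrow(\omega):=\{\eta\in\Sigma\mid\eta\subset\omega\}$, and $\rho[\omega]\propto\mathbb{P}_x[\omega]$ ($\omega\in\Omega$), $\gamma[\eta]\propto1$ ($\eta\in\Sigma$). Let $\mathscr{P}$ be the probability measure on $\Omega\times\Sigma$ with $\mathscr{P}[\omega,\eta]\propto\rho[\omega]\gamma[\eta]\mathbf{1}[\eta\in f(\omega)]$. Then: (a) The marginal $\mathscr{P}_\Sigma$ on $\Sigma$ satisfies $\mathscr{P}_\Sigma[\eta]\propto\prod_{e\in\eta}x_e$. For each $\omega$ with $\mathscr{P}_\Omega[\omega]\neq0$, $\mathscr{P}[\cdot\mid\omega]$ is the uniform measure on $\Sigma^\downarrow(\omega)$. (b) The marginal on $\Omega$ is $\mathscr{P}_\Omega=\mathscr{P}_\Sigma\cup\mathbb{P}_x$. For each $\eta\in\Sigma$ with $\mathscr{P}_\Sigma[\eta]\neq0$, $\mathscr{P}[\cdot\mid\eta]=\mathbb{P}_x\cup\delta_\eta$.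
   Context: Elements of $\{0,1\}^E$ are identified with subsets of $E$. $\mathbb{P}_x$ is Bernoulli percolation with edge $e$ open independently with probability $x_e$; $\delta_\eta$ is the Dirac mass at $\eta$; for measures $\pi,\nu$ on $\{0,1\}^E$, $\pi\cup\nu$ is the law of the union of independent samples of $\pi$ and $\nu$. *)

(* Defs.v *)
From mathcomp Require Import all_boot all_order all_algebra.
Set Implicit Arguments. Unset Strict Implicit. Unset Printing Implicit Defensive.
Import Order.TTheory GRing.Theory Num.Theory.
Local Open Scope ring_scope.

(* Configurations omega in {0,1}^E are identified with subsets {set E}.
   Measures on {0,1}^E are functions {set E} -> R (finite, so point masses). *)

Section Defs.
Variables (R : realFieldType) (E : finType).

Definition Pperc (x : E -> R) (w : {set E}) : R :=
  (\prod_(e in w) x e) * \prod_(e in ~: w) (1 - x e).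

Definition dirac_set (eta : {set E}) (w : {set E}) : R := (eta == w)%:R.

Definition union_law (pi nu : {set E} -> R) (w : {set E}) : R :=
  \sum_(a : {set E}) \sum_(b : {set E} | a :|: b == w) pi a * nu b.

Definition Sdown (Sigma : {set {set E}}) (w : {set E}) : {set {set E}} :=
  [set eta in Sigma | eta \subset w].

Definition jweight (x : E -> R) (Sigma : {set {set E}}) (w eta : {set E}) : R :=
  Pperc x w * (eta \in Sdown Sigma w)%:R.

Definition jZ (x : E -> R) (Sigma : {set {set E}}) : R :=
  \sum_(w : {set E}) \sum_(eta : {set E}) jweight x Sigma w eta.

(* the joint probability measure scrP on Omega x Sigma (zero off Sigma) *)
Definition jointP (x : E -> R) (Sigma : {set {set E}}) (w eta : {set E}) : R :=
  jweight x Sigma w eta / jZ x Sigma.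

Definition margSigma x Sigma (eta : {set E}) : R :=
  \sum_(w : {set E}) jointP x Sigma w eta.

Definition margOmega x Sigma (w : {set E}) : R :=
  \sum_(eta : {set E}) jointP x Sigma w eta.

End Defs.

(* Main.v *)
Require Import Defs.
From mathcomp Require Import all_boot all_order all_algebra.
From mathcomp Require Import ring.
Import Order.TTheory GRing.Theory Num.Theory.
Local Open Scope ring_scope.

Section Aux.
Variables (R : realFieldType) (E : finType).
Implicit Types (x : E -> R).

Lemma sum_sets (F : E -> bool -> R) :
  \sum_(b : {set E}) \prod_e F e (e \in b) = \prod_e (F e true + F e false).
Proof.
rewrite [RHS](eq_bigr (fun e => \sum_(j : bool) F e j)); last by move=> e _; rewrite big_bool.
rewrite bigA_distr_bigA.
rewrite (reindex (fun f : {ffun E -> bool} => [set e | f e])) /=.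
  by apply: eq_bigr => f _; apply: eq_bigr => e _; rewrite inE.
exists (fun b : {set E} => [ffun e => e \in b]).
  by move=> f _; apply/ffunP => e; rewrite ffunE inE.
by move=> b _; apply/setP => e; rewrite inE ffunE.
Qed.

Lemma PpercE x b : Pperc x b = \prod_e (if e \in b then x e else 1 - x e).
Proof.
rewrite /Pperc [RHS](bigID (mem b)) /=; congr (_ * _).
  by apply: eq_bigr => e ->.
rewrite (eq_bigl (fun e => e \notin b)); last by move=> e; rewrite in_setC.
by apply: eq_bigr => e /negbTE ->.
Qed.

Lemma sumP x (I : E -> bool -> R) :
  \sum_(b : {set E}) (\prod_e I e (e \in b)) * Pperc x b =
  \prod_e (I e true * x e + I e false * (1 - x e)).
Proof.
rewrite -(sum_sets (fun (e : E) (t : bool) => I e t * (if t then x e else 1 - x e))).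
by apply: eq_bigr => b _; rewrite PpercE -big_split.
Qed.

Lemma forall_nat (p : pred E) : ([forall e, p e])%:R = \prod_e (p e)%:R :> R.
Proof.
case: (boolP [forall e, p e]) => [/forallP h|/forallPn [e he]].
  by rewrite big1 // => e _; rewrite h.
by rewrite (bigD1 e) //= (negbTE he) mul0r.
Qed.

Lemma subset_nat (A B : {set E}) :
  (A \subset B)%:R = \prod_e ((e \in A) ==> (e \in B))%:R :> R.
Proof.
rewrite -forall_nat; congr (_%:R); congr nat_of_bool; apply/subsetP/forallP => h e.
  by apply/implyP => /h.
by move/(implyP (h e)).
Qed.

Lemma eqset_nat (A B : {set E}) :
  (A == B)%:R = \prod_e ((e \in A) == (e \in B))%:R :> R.
Proof.
rewrite -forall_nat; congr (_%:R); congr nat_of_bool; apply/eqP/forallP => [-> e|h].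
  by rewrite eqxx.
by apply/setP => e; apply/eqP/h.
Qed.

Lemma ifmul (c : bool) (y : R) : (if c then y else 0) = c%:R * y.
Proof. by case: c; rewrite ?mul1r ?mul0r. Qed.

Lemma lemA x (eta : {set E}) :
  \sum_(w : {set E}) (eta \subset w)%:R * Pperc x w = \prod_(e in eta) x e.
Proof.
rewrite (eq_bigr (fun w : {set E} => (\prod_e ((e \in eta) ==> (e \in w))%:R) * Pperc x w)); last first.
  by move=> w _; rewrite subset_nat.
rewrite (sumP x (fun (e : E) (t : bool) => ((e \in eta) ==> t)%:R)) [RHS]big_mkcond /=.
apply: eq_bigr => e _; case: (e \in eta) => /=; ring.
Qed.

Lemma prod_nz x (hx : forall e, 0 < x e < 1) (a : {set E}) :
  \prod_(e in a) x e != 0.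
Proof.
rewrite gt_eqF // prodr_gt0 // => e _; by case/andP: (hx e).
Qed.

Lemma lemB x (hx : forall e, 0 < x e < 1) (a w : {set E}) :
  \sum_(b | a :|: b == w) Pperc x b =
  (a \subset w)%:R * Pperc x w / \prod_(e in a) x e.
Proof.
apply: (mulIf (prod_nz x hx a)); rewrite divfK ?prod_nz //.
rewrite big_mkcond /=.
under eq_bigr do rewrite ifmul eqset_nat.
under eq_bigr do under eq_bigr do rewrite in_setU.
rewrite (sumP x (fun (e : E) (t : bool) => ((e \in a) || t == (e \in w))%:R)).
rewrite [\prod_(e in a) _]big_mkcond subset_nat PpercE -!big_split /=.
by apply: eq_bigr => e _; case: (e \in a); case: (e \in w) => /=; ring.
Qed.

Lemma sum_ind (S : {set {set E}}) :
  \sum_(eta : {set E}) (eta \in S)%:R = #|S|%:R :> R.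
Proof.
transitivity (\sum_(eta in S) (1:R)); last by rewrite sumr_const.
by rewrite [RHS]big_mkcond; apply: eq_bigr => eta _; case: (eta \in S).
Qed.

End Aux.

Section Main.
Variables (R : realFieldType) (E : finType).
Implicit Types (x : E -> R).

Lemma jweightE x S w eta : jweight x S w eta =
  (eta \in S)%:R * ((eta \subset w)%:R * Pperc x w).
Proof. by rewrite /jweight /Sdown inE -mulnb natrM; ring. Qed.

Lemma jZE x S : jZ x S = \sum_(eta in S) \prod_(e in eta) x e.
Proof.
rewrite /jZ exchange_big [RHS]big_mkcond /=; apply: eq_bigr => eta _.
rewrite (eq_bigr _ (fun w _ => jweightE x S w eta)) -mulr_sumr lemA.
by case: (eta \in S); rewrite ?mul1r ?mul0r.
Qed.

Lemma margSigmaE x S eta :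
  margSigma x S eta = (eta \in S)%:R * \prod_(e in eta) x e / jZ x S.
Proof.
rewrite /margSigma /jointP -mulr_suml.
by rewrite (eq_bigr _ (fun w _ => jweightE x S w eta)) -mulr_sumr lemA.
Qed.

Lemma margOmegaE x S w :
  margOmega x S w = Pperc x w * #|Sdown S w|%:R / jZ x S.
Proof.
by rewrite /margOmega /jointP -mulr_suml /jweight -mulr_sumr sum_ind.
Qed.

End Main.

Theorem corollary3p2 (R : realFieldType) (V E : finType) (ends : E -> V * V)
    (x : E -> R) (hx : forall e, 0 < x e < 1)
    (Sigma : {set {set E}}) (hSigma : Sigma != set0) :
  (* (a) marginal on Sigma is proportional to prod_{e in eta} x_e *)
  ((forall eta : {set E},
      margSigma x Sigma eta =
        (eta \in Sigma)%:R * (\prod_(e in eta) x e) /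
          (\sum_(eta' in Sigma) \prod_(e in eta') x e))
  /\ (* conditional on omega is uniform on Sigma^down(omega) *)
   (forall w : {set E}, margOmega x Sigma w != 0 ->
      forall eta : {set E},
        jointP x Sigma w eta / margOmega x Sigma w =
          (eta \in Sdown Sigma w)%:R / #|Sdown Sigma w|%:R))
  /\
  (* (b) marginal on Omega is P_Sigma \cup P_x *)
  ((forall w : {set E},
      margOmega x Sigma w = union_law (margSigma x Sigma) (Pperc x) w)
  /\ (* conditional on eta is P_x \cup delta_eta *)
   (forall eta : {set E}, eta \in Sigma -> margSigma x Sigma eta != 0 ->
      forall w : {set E},
        jointP x Sigma w eta / margSigma x Sigma eta =
          union_law (Pperc x) (@dirac_set R E eta) w)).
Proof.
have pp : forall a : {set E}, 0 < \prod_(e in a) x e.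
  by move=> a; rewrite prodr_gt0 // => e _; case/andP: (hx e).
have hZ0 : jZ x Sigma != 0.
  rewrite jZE; case/set0Pn: hSigma => eta0 h0.
  rewrite gt_eqF // (bigD1 eta0) //=; apply: lt_le_trans (pp eta0) _.
  by rewrite lerDl sumr_ge0 // => i _; apply: ltW.
split; [split|split].
- by move=> eta; rewrite margSigmaE jZE.
- move=> w hw eta; rewrite margOmegaE in hw *.
  move: hw; rewrite mulf_eq0 negb_or invr_eq0 => /andP [hPc hZ].
  move: hPc; rewrite mulf_eq0 negb_or => /andP[hP hc].
  rewrite /jointP /jweight; field.
  by rewrite hP hc hZ.
- move=> w; rewrite margOmegaE /union_law.
  rewrite (eq_bigr (fun a => margSigma x Sigma a *
     \sum_(b | a :|: b == w) Pperc x b)); last by move=> a _; rewrite mulr_sumr.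
  rewrite -sum_ind mulr_sumr mulr_suml; apply: eq_bigr => a _.
  rewrite margSigmaE (@lemB _ _ x hx) /Sdown inE -mulnb natrM; field.
  by rewrite (@prod_nz _ _ x hx) hZ0.
- move=> eta hS hm w.
  rewrite margSigmaE hS mul1r in hm *.
  move: hm; rewrite mulf_eq0 negb_or invr_eq0 => /andP [hp hZ].
  rewrite /union_law.
  rewrite (eq_bigr (fun a => (a :|: eta == w)%:R * Pperc x a)); last first.
    move=> a _; rewrite big_mkcond (bigD1 eta) //= big1 ?addr0.
      by rewrite /dirac_set eqxx mulr1; case: (a :|: eta == w); rewrite ?mul1r ?mul0r.
    move=> b hb; rewrite /dirac_set (eq_sym eta b) (negbTE hb) mulr0.
    by case: ifP.
  rewrite (eq_bigr (fun a => if a :|: eta == w then Pperc x a else 0)); last first.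
    by move=> a _; rewrite ifmul.
  rewrite -big_mkcond /= (eq_bigl (fun a => eta :|: a == w)); last first.
    by move=> a; rewrite setUC.
  rewrite (@lemB _ _ x hx) /jointP jweightE hS mul1r; field.
  by rewrite hp hZ.
Qed.
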